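(* Let $G$ be a connected graph with at least $3$ vertices such that $D(G)$ is an infinite cardinal. Then $D'(G)\le D(G)$.
   Context: Graphs are simple and may be infinite. A colouring (of vertices or edges) is distinguishing if the identity is the only automorphism of $G$ preserving it, where $\gamma$ preserves a vertex colouring $c$ if $c\circ\gamma=c$ and an edge colouring $d$ if $d(\gamma(u)\gamma(v))=d(uv)$ for all edges $uv$. $D(G)$ is the least number (cardinal) of colours in a distinguishing vertex colouring, and $D'(G)$ the least number of colours in a distinguishing edge colouring. *)

(* Defs.v *)
(* graphs may be infinite, so we work with arbitrary types and
   Prop-valued adjacency relations; cardinals are compared via injections. *)
From Stdlib Require Import Relations Relation_Operators.

Definition simple_graph {V : Type} (adj : V -> V -> Prop) : Prop :=
  (forall u v, adj u v -> adj v u) /\ (forall v, ~ adj v v).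

Definition connected {V : Type} (adj : V -> V -> Prop) : Prop :=
  forall u v : V, clos_refl_trans V adj u v.

Definition at_least_three_vertices (V : Type) : Prop :=
  exists a b c : V, a <> b /\ b <> c /\ a <> c.

Definition injective {A B : Type} (f : A -> B) : Prop :=
  forall x y, f x = f y -> x = y.

Definition bijective {A B : Type} (f : A -> B) : Prop :=
  injective f /\ forall y, exists x, f x = y.

Definition automorphism {V : Type} (adj : V -> V -> Prop) (g : V -> V) : Prop :=
  bijective g /\ forall u v, adj u v <-> adj (g u) (g v).

Definition distinguishing_vcol {V C : Type} (adj : V -> V -> Prop) (c : V -> C) : Prop :=
  forall g, automorphism adj g -> (forall v, c (g v) = c v) -> forall v, g v = v.

(* An edge colouring with colours in C: a function d on ordered pairs whose
   value on an edge uv does not depend on the orientation (values on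
   non-edges are irrelevant). *)
Definition edge_colouring {V C : Type} (adj : V -> V -> Prop) (d : V -> V -> C) : Prop :=
  forall u v, adj u v -> d u v = d v u.

Definition distinguishing_ecol {V C : Type} (adj : V -> V -> Prop) (d : V -> V -> C) : Prop :=
  forall g, automorphism adj g ->
    (forall u v, adj u v -> d (g u) (g v) = d u v) -> forall v, g v = v.

(* |C| = D(G): C admits a distinguishing vertex colouring, and |C| <= |C'|
   for every colour set C' admitting one. *)
Definition is_D {V : Type} (adj : V -> V -> Prop) (C : Type) : Prop :=
  (exists c : V -> C, distinguishing_vcol adj c) /\
  (forall (C' : Type) (c' : V -> C'), distinguishing_vcol adj c' ->
     exists f : C -> C', injective f).

Definition infinite_type (C : Type) : Prop :=
  forall n : nat, ~ exists f : C -> {k : nat | k < n}, injective f.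

(* Main.v *)
Require Import Defs.
From Stdlib Require Import Relations Relation_Operators Operators_Properties.
From Stdlib Require Import Classical ClassicalEpsilon Lia List Arith Wf_nat.

Fixpoint pos {C : Type} (x : C) (l : list C) : nat :=
  match l with
  | nil => 0
  | y :: l' => if excluded_middle_informative (x = y) then 0 else S (pos x l')
  end.

Lemma pos_lt {C : Type} (x : C) l : In x l -> pos x l < length l.
Proof.
  induction l as [|y l IH]; simpl; [tauto|].
  intros H; destruct (excluded_middle_informative (x = y)); [lia|].
  destruct H as [H|H]; [congruence|]. specialize (IH H); lia.
Qed.

Lemma pos_inj {C : Type} (x y : C) l : In x l -> In y l -> pos x l = pos y l -> x = y.
Proof.
  induction l as [|z l IH]; simpl; [tauto|].
  intros Hx Hy.
  destruct (excluded_middle_informative (x = z)); destruct (excluded_middle_informative (y = z));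
    try congruence; intro E; try discriminate.
  injection E; intro E'. apply IH; auto.
  destruct Hx; [congruence|auto]. destruct Hy; [congruence|auto].
Qed.

Lemma notin_list {C : Type} (Hinf : infinite_type C) (l : list C) : exists x, ~ In x l.
Proof.
  apply NNPP; intro Hn.
  assert (Hall : forall x, In x l) by (intro x; apply NNPP; intro; apply Hn; eauto).
  apply (Hinf (length l)).
  exists (fun x => exist (fun k => k < length l) (pos x l) (pos_lt x l (Hall x))).
  intros x y Hxy. apply (f_equal (@proj1_sig _ _)) in Hxy. simpl in Hxy.
  apply (pos_inj x y l); auto.
Qed.

Definition fresh {C : Type} (H : infinite_type C) (l : list C) : C :=
  proj1_sig (constructive_indefinite_description _ (notin_list H l)).

Lemma fresh_spec {C : Type} (H : infinite_type C) l : ~ In (fresh H l) l.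
Proof. unfold fresh. exact (proj2_sig (constructive_indefinite_description _ (notin_list H l))). Qed.

Fixpoint seqL {C : Type} (H : infinite_type C) (n : nat) : list C :=
  match n with
  | 0 => nil
  | S m => fresh H (seqL H m) :: seqL H m
  end.

Definition enat {C : Type} (H : infinite_type C) (n : nat) : C := fresh H (seqL H n).

Lemma enat_in {C : Type} (H : infinite_type C) n m : n < m -> In (enat H n) (seqL H m).
Proof.
  induction m; intro Hnm; [lia|]. simpl.
  destruct (Nat.eq_dec n m) as [->|Hne]; [left; reflexivity|right; apply IHm; lia].
Qed.

Lemma enat_inj {C : Type} (H : infinite_type C) : injective (enat H).
Proof.
  intros n m E. destruct (Nat.lt_trichotomy n m) as [L|[L|L]]; auto; exfalso.
  - apply (fresh_spec H (seqL H m)). fold (enat H m). rewrite <- E. apply enat_in; auto.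
  - apply (fresh_spec H (seqL H n)). fold (enat H n). rewrite E. apply enat_in; auto.
Qed.

Definition code {C : Type} (e : nat -> C) (x : C) : C :=
  match excluded_middle_informative (exists n, x = e n) with
  | left H => e (S (S (S (proj1_sig (constructive_indefinite_description _ H)))))
  | right _ => x
  end.

Lemma code_ne {C : Type} (e : nat -> C) (He : injective e) x k : k < 3 -> code e x <> e k.
Proof.
  intro Hk. unfold code. destruct (excluded_middle_informative (exists n, x = e n)) as [H|H].
  - destruct (constructive_indefinite_description _ H) as [n Hn]; simpl.
    intro E; apply He in E; lia.
  - intro E; apply H; eauto.
Qed.

Lemma code_inj {C : Type} (e : nat -> C) (He : injective e) : injective (code e).
Proof.
  intros x y. unfold code.
  destruct (excluded_middle_informative (exists n, x = e n)) as [H|H];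
  destruct (excluded_middle_informative (exists n, y = e n)) as [H'|H'].
  - destruct (constructive_indefinite_description _ H) as [n Hn];
    destruct (constructive_indefinite_description _ H') as [m Hm]; simpl.
    intro E; apply He in E. injection E; intro; subst; auto.
  - destruct (constructive_indefinite_description _ H) as [n Hn]; simpl.
    intro E; exfalso; apply H'; eauto.
  - destruct (constructive_indefinite_description _ H') as [n Hn]; simpl.
    intro E; exfalso; apply H; eauto.
  - auto.
Qed.

Fixpoint reach {V : Type} (adj : V -> V -> Prop) (r : V) (n : nat) (v : V) : Prop :=
  match n with
  | 0 => v = r
  | S m => exists u, reach adj r m u /\ adj u v
  end.

Definition dist {V : Type} (adj : V -> V -> Prop) (r v : V) (n : nat) : Prop :=
  reach adj r n v /\ forall m, m < n -> ~ reach adj r m v.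

Lemma reach_ex {V : Type} (adj : V -> V -> Prop) r v :
  clos_refl_trans V adj r v -> exists n, reach adj r n v.
Proof.
  intro H. apply clos_rt_rtn1 in H. induction H as [|y z Hyz Hy IH].
  - exists 0; reflexivity.
  - destruct IH as [n Hn]. exists (S n). simpl; eauto.
Qed.

Lemma min_ex (P : nat -> Prop) : (exists n, P n) -> exists n, P n /\ forall m, m < n -> ~ P m.
Proof.
  intros [n Hn]. apply NNPP; intro H.
  assert (forall k, ~ P k).
  { intro k. induction k as [k IH] using (well_founded_induction lt_wf).
    intro Pk. apply H. exists k. split; auto. }
  eauto.
Qed.

Lemma dist_uniq {V : Type} (adj : V -> V -> Prop) r v n m :
  dist adj r v n -> dist adj r v m -> n = m.
Proof.
  intros [Hn Hn'] [Hm Hm']. destruct (Nat.lt_trichotomy n m) as [L|[L|L]]; auto; exfalso.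
  - exact (Hm' n L Hn).
  - exact (Hn' m L Hm).
Qed.

Lemma reach_g {V : Type} (adj : V -> V -> Prop) r g :
  automorphism adj g -> g r = r -> forall n v, reach adj r n v <-> reach adj r n (g v).
Proof.
  intros [[Hinj Hsurj] Hadj] Hr n. induction n as [|n IH]; intro v; simpl.
  - split; intro H. subst; auto. apply Hinj. congruence.
  - split.
    + intros [u [Hu Huv]]. exists (g u). split; [apply (proj1 (IH u)); auto|apply (proj1 (Hadj u v)); auto].
    + intros [u [Hu Huv]]. destruct (Hsurj u) as [w <-]. exists w.
      split; [apply (proj2 (IH w)); auto|apply (proj2 (Hadj w v)); auto].
Qed.

Lemma deg2 {V : Type} (adj : V -> V -> Prop) (Hs : simple_graph adj)
  (Hc : connected adj) (H3 : at_least_three_vertices V) :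
  exists r s t, adj r s /\ adj r t /\ s <> t.
Proof.
  apply NNPP; intro Hn. destruct H3 as [a [b [c' [Hab [Hbc Hac]]]]].
  assert (Huniq : forall x y z, adj x y -> adj x z -> y = z).
  { intros x y z H1 H2. apply NNPP; intro; apply Hn; exists x, y, z; auto. }
  assert (Hcl : forall y, clos_refl_trans V adj a y -> y = a \/ adj a y).
  { intros y Hy. apply clos_rt_rtn1 in Hy. induction Hy as [|y z Hyz Hy IH].
    - left; auto.
    - destruct IH as [->|Hay]. right; auto.
      left. symmetry. apply (Huniq y); [apply (proj1 Hs); auto|auto]. }
  destruct (Hcl b (Hc a b)) as [E|Hb]; [congruence|].
  destruct (Hcl c' (Hc a c')) as [E|Hc']; [congruence|].
  apply Hn; exists a, b, c'; auto.
Qed.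

Theorem mainTheorem7 (V : Type) (adj : V -> V -> Prop) (C : Type)
  (Hsimple : simple_graph adj) (Hconn : connected adj)
  (H3 : at_least_three_vertices V)
  (HD : is_D adj C) (Hinf : infinite_type C) :
  exists d : V -> V -> C, edge_colouring adj d /\ distinguishing_ecol adj d.
Proof.
  destruct HD as [[c Hc] _].
  pose (e := enat Hinf). assert (einj : injective e) by apply enat_inj.
  destruct (deg2 adj Hsimple Hconn H3) as [r [s [t [Hrs [Hrt Hst]]]]].
  assert (Hsr : s <> r) by (intro; subst; apply (proj2 Hsimple r); auto).
  assert (Htr : t <> r) by (intro; subst; apply (proj2 Hsimple r); auto).
  assert (Hex : forall v, exists n, dist adj r v n).
  { intro v. apply min_ex. apply reach_ex. apply Hconn. }
  pose (depth := fun v => proj1_sig (constructive_indefinite_description _ (Hex v))).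
  assert (Hdepth : forall v, dist adj r v (depth v)).
  { intro v. exact (proj2_sig (constructive_indefinite_description _ (Hex v))). }
  assert (Hpar_ex : forall v, exists u, v = r \/ (adj u v /\ S (depth u) = depth v)).
  { intro v. destruct (classic (v = r)) as [E|E]. exists r; left; auto.
    destruct (Hdepth v) as [Hr Hmin]. destruct (depth v) as [|m] eqn:Ed.
    - simpl in Hr; contradiction.
    - simpl in Hr. destruct Hr as [u [Hu Huv]]. exists u. right. split; auto.
      assert (Du : dist adj r u m).
      { split; auto. intros k Hk Hku. apply (Hmin (S k)); [lia|simpl; eauto]. }
      rewrite (dist_uniq _ _ _ _ _ (Hdepth u) Du). reflexivity. }
  pose (parent := fun v => proj1_sig (constructive_indefinite_description _ (Hpar_ex v))).
  assert (Hpar : forall v, v = r \/ (adj (parent v) v /\ S (depth (parent v)) = depth v)).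
  { intro v. exact (proj2_sig (constructive_indefinite_description _ (Hpar_ex v))). }
  assert (Hpp : forall u v, u = parent v -> v <> r -> v = parent u -> u <> r -> False).
  { intros u v E1 N1 E2 N2. destruct (Hpar v) as [|[_ D1]]; [contradiction|].
    destruct (Hpar u) as [|[_ D2]]; [contradiction|]. rewrite <- E1 in D1. rewrite <- E2 in D2. lia. }
  pose (d := fun u v =>
    if excluded_middle_informative ((u = r /\ v = s) \/ (u = s /\ v = r)) then e 1
    else if excluded_middle_informative ((u = r /\ v = t) \/ (u = t /\ v = r)) then e 2
    else if excluded_middle_informative (u = parent v /\ v <> r) then code e (c v)
    else if excluded_middle_informative (v = parent u /\ u <> r) then code e (c u)
    else e 0).
  exists d. split.
  - intros u v _. unfold d.
    repeat destruct (excluded_middle_informative _); try reflexivity; try (exfalso; tauto);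
    try (exfalso; apply (Hpp u v); tauto).
  - intros g Hg Hpres. apply Hc; auto.
    assert (Hd1 : forall x y, d x y = e 1 -> (x = r /\ y = s) \/ (x = s /\ y = r)).
    { intros x y. unfold d.
      repeat destruct (excluded_middle_informative _); auto; intro E;
      try (apply einj in E; discriminate); exfalso; first [eapply (code_ne e einj); [|exact E]; lia | eapply (code_ne e einj); [|symmetry; exact E]; lia]. }
    assert (Hd2 : forall x y, d x y = e 2 -> (x = r /\ y = t) \/ (x = t /\ y = r)).
    { intros x y. unfold d.
      repeat destruct (excluded_middle_informative _); auto; intro E;
      try (apply einj in E; discriminate); exfalso; first [eapply (code_ne e einj); [|exact E]; lia | eapply (code_ne e einj); [|symmetry; exact E]; lia]. }
    assert (Hdc : forall x y z, d x y = code e z ->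
      (S (depth x) = depth y /\ c y = z) \/ (S (depth y) = depth x /\ c x = z)).
    { intros x y z. unfold d.
      repeat destruct (excluded_middle_informative _); intro E;
      try (exfalso; first [eapply (code_ne e einj); [|exact E]; lia | eapply (code_ne e einj); [|symmetry; exact E]; lia]).
      - left. destruct a as [-> N]. destruct (Hpar y) as [|[_ D]]; [contradiction|].
        split; auto. apply (code_inj e einj); auto.
      - right. destruct a as [-> N]. destruct (Hpar x) as [|[_ D]]; [contradiction|].
        split; auto. apply (code_inj e einj); auto. }
    assert (Gr : g r = r /\ g s = s /\ g t = t).
    { pose proof (Hd1 _ _ (eq_trans (Hpres r s Hrs) (ltac:(unfold d; destruct (excluded_middle_informative _); [reflexivity|tauto])))) as A.
      assert (Hrt' : d r t = e 2).
      { unfold d. destruct (excluded_middle_informative _) as [[[_ X]|[X _]]|_]; [congruence|congruence|].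
        destruct (excluded_middle_informative _); [reflexivity|tauto]. }
      pose proof (Hd2 _ _ (eq_trans (Hpres r t Hrt) Hrt')) as B.
      destruct A as [[A1 A2]|[A1 A2]]; destruct B as [[B1 B2]|[B1 B2]]; first [repeat split; congruence | exfalso; congruence]. }
    destruct Gr as [Gr [Gs Gt]].
    assert (Gd : forall v, depth (g v) = depth v).
    { intro v. symmetry. apply (dist_uniq adj r (g v)); [|apply Hdepth].
      destruct (Hdepth v) as [H1 H2]. split.
      - apply (proj1 (reach_g adj r g Hg Gr _ v)); auto.
      - intros m Hm Hr'. apply (H2 m Hm). apply (proj2 (reach_g adj r g Hg Gr _ v)); auto. }
    intro v.
    destruct (classic (v = r)) as [->|Nr]; [rewrite Gr; auto|].
    destruct (classic (v = s)) as [->|Ns]; [rewrite Gs; auto|].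
    destruct (classic (v = t)) as [->|Nt]; [rewrite Gt; auto|].
    destruct (Hpar v) as [|[Hadj D]]; [contradiction|].
    assert (Dv : d (parent v) v = code e (c v)).
    { unfold d. repeat destruct (excluded_middle_informative _); try tauto. }
    pose proof (Hdc _ _ _ (eq_trans (Hpres _ _ Hadj) Dv)) as [[D1 E]|[D1 E]]; auto.
    rewrite !Gd in D1. lia.
Qed.
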